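(* Let $G=(V,E,s_0,s_1)$ be a switch graph, $o,d\in V$ with $o\neq d$, and let $e=(v,w)\in E$ be a hopeful edge of desperation $k$. Then $\textsc{Run}(G,o,d)$ traverses $e$ at most $2^{k+1}-1$ times.
   Context: A switch graph is a 4-tuple $G=(V,E,s_0,s_1)$ where $V$ is a finite vertex set, $s_0,s_1:V\to V$, and $E=\{(v,s_0(v)):v\in V\}\cup\{(v,s_1(v)):v\in V\}$ (loops allowed; possibly $s_0(v)=s_1(v)$). The procedure $\textsc{Run}(G,o,d)$: maintain arrays $\mathtt{s\_curr},\mathtt{s\_next}$ indexed by $V$, initially $\mathtt{s\_curr}[v]=s_0(v)$, $\mathtt{s\_next}[v]=s_1(v)$; set $v:=o$; while $v\neq d$: $w:=\mathtt{s\_curr}[v]$, swap $\mathtt{s\_curr}[v],\mathtt{s\_next}[v]$, $v:=w$ (traversing edge $(v,w)$); the run may be infinite. A dead end is a vertex from which there is no directed path to $d$ in the directed graph $(V,E)$. An edge $(v,w)$ is dead if $w$ is a dead end, and hopeful otherwise; the desperation of a hopeful edge $(v,w)$ is the length of a shortest directed path from $w$ to $d$ in $(V,E)$ (so desperation $0$ means $w=d$). *)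

(* Defs.v *)
From mathcomp Require Import all_boot.
Set Implicit Arguments. Unset Strict Implicit. Unset Printing Implicit Defensive.

Definition sw_edge (V : finType) (s0 s1 : V -> V) : rel V :=
  [rel x y | (y == s0 x) || (y == s1 x)].

Record run_state (V : finType) := RunState {
  rs_pos  : V;
  rs_curr : V -> V;
  rs_next : V -> V }.

(* One iteration of the while loop; once v = d the run has stopped,
   and the state is left unchanged. *)
Definition run_step (V : finType) (d : V) (st : run_state V) : run_state V :=
  let v := rs_pos st in
  if v == d then st else
  let w := rs_curr st v in
  RunState w
    (fun u => if u == v then rs_next st v else rs_curr st u)
    (fun u => if u == v then rs_curr st v else rs_next st u).

Fixpoint run_state_at (V : finType) (s0 s1 : V -> V) (o d : V) (n : nat)
  : run_state V :=
  match n with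
  | 0 => RunState o s0 s1
  | n'.+1 => run_step d (run_state_at s0 s1 o d n')
  end.

Definition traverses_at (V : finType) (s0 s1 : V -> V) (o d v w : V) (i : nat)
  : bool :=
  let st := run_state_at s0 s1 o d i in
  [&& rs_pos st != d, rs_pos st == v & rs_curr st v == w].

Definition traversals (V : finType) (s0 s1 : V -> V) (o d v w : V) (n : nat)
  : nat :=
  \sum_(i < n) traverses_at s0 s1 o d v w i.

Definition dead_end (V : finType) (s0 s1 : V -> V) (d x : V) : bool :=
  ~~ connect (sw_edge s0 s1) x d.

Definition path_len (V : finType) (s0 s1 : V -> V) (d x : V) (k : nat) : Prop :=
  exists p : seq V, [/\ path (sw_edge s0 s1) x p, last x p = d & size p = k].

Definition desperation (V : finType) (s0 s1 : V -> V) (d w : V) (k : nat) : Prop :=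
  path_len s0 s1 d w k /\ forall j, j < k -> ~ path_len s0 s1 d w j.

(* Main.v *)
Require Import Defs.
From mathcomp Require Import all_boot.
From mathcomp Require Import zify.

Set Implicit Arguments. Unset Strict Implicit. Unset Printing Implicit Defensive.

Lemma perm_inv (V : finType) (s0 s1 : V -> V) (o d : V) n u :
  let st := run_state_at s0 s1 o d n in
  ((rs_curr st u == s0 u) && (rs_next st u == s1 u)) ||
  ((rs_curr st u == s1 u) && (rs_next st u == s0 u)).
Proof.
elim: n => [|n IH] /=; first by rewrite !eqxx.
rewrite /run_step.
case: (rs_pos _ =P d) => [_|_] //=.
move: IH; set st := run_state_at _ _ _ _ _.
case: (u =P _) => [->|_] //.
case/orP=> /andP[/eqP -> /eqP ->]; by rewrite !eqxx ?orbT.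
Qed.

Definition exits (V : finType) (s0 s1 : V -> V) (o d w : V) n :=
  \sum_(i < n) ((rs_pos (run_state_at s0 s1 o d i) != d) &&
                (rs_pos (run_state_at s0 s1 o d i) == w)).

Lemma alt (V : finType) (s0 s1 : V -> V) (o d w x : V) :
  (x == s0 w) || (x == s1 w) -> forall n,
  exits s0 s1 o d w n <= 2 * traversals s0 s1 o d w x n
                          + (rs_curr (run_state_at s0 s1 o d n) w == x).
Proof.
move=> hx; elim=> [|n IH]; first by rewrite /exits /traversals !big_ord0.
rewrite /exits /traversals !big_ord_recr /= -/(exits _ _ _ _ _ _) -/(traversals _ _ _ _ _ _ _).
rewrite /traverses_at /run_step.
have P := perm_inv s0 s1 o d n w.
move: IH P.
set st := run_state_at _ _ _ _ _.
case: (rs_pos st =P d) => [_|_] /=; first by move=> IH P; lia.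
case: (rs_pos st =P w) => [->|ne] /=; last first.
  have -> : (w == rs_pos st) = false by apply/eqP=> e; apply: ne; rewrite e.
  by move=> IH P; lia.
rewrite eqxx /=.
case: (rs_curr st w =P x) => [_|ne] /=; first by move=> IH P; lia.
move=> IH P.
have hn : rs_next st w = x.
  case/orP: P => /andP[/eqP a /eqP b]; case/orP: hx => /eqP ex;
  rewrite b ex //; exfalso; apply: ne; by rewrite a ex.
rewrite hn eqxx.
lia.
Qed.

Lemma entries (V : finType) (s0 s1 : V -> V) (o d v w : V) n :
  traversals s0 s1 o d v w n <=
  exits s0 s1 o d w n + (rs_pos (run_state_at s0 s1 o d n) == w).
Proof.
elim: n => [|n IH]; first by rewrite /exits /traversals !big_ord0.
rewrite /exits /traversals !big_ord_recr /= -/(exits _ _ _ _ _ _) -/(traversals _ _ _ _ _ _ _).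
rewrite /traverses_at /run_step.
move: IH.
set st := run_state_at _ _ _ _ _.
case: (rs_pos st =P d) => [_|_] /=; first by move=> IH; lia.
case: (rs_pos st =P v) => [->|_] /=.
  by move=> IH; lia.
case: (rs_pos st =P w) => /= _ IH; lia.
Qed.

Lemma exits_d (V : finType) (s0 s1 : V -> V) (o d : V) n :
  exits s0 s1 o d d n = 0.
Proof.
rewrite /exits big1 // => i _.
by case: (rs_pos _ =P d) => /=.
Qed.

Lemma entries2 (V : finType) (s0 s1 : V -> V) (o d v w : V) n :
  w != d ->
  traversals s0 s1 o d v w n <= exits s0 s1 o d w n.+1.
Proof.
move=> wd; have := entries s0 s1 o d v w n.
rewrite /exits big_ord_recr /= -/(exits _ _ _ _ _ _).
case: (rs_pos _ =P w) => [e|_] /=; last by lia.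
by rewrite e wd /=; lia.
Qed.

Lemma main (V : finType) (s0 s1 : V -> V) (o d : V) (p : seq V) :
  forall w, path (sw_edge s0 s1) w p -> last w p = d ->
  forall v n, traversals s0 s1 o d v w n <= 2 ^ (size p).+1 - 1.
Proof.
elim: p => [|x p IH] w /=.
  move=> _ -> v n; have := entries s0 s1 o d v d n.
  rewrite exits_d; case: (_ == d) => /=; rewrite expn1; lia.
case/andP=> hwx hp hl v n.
have IHx := IH x hp hl.
case: (w =P d) => [->|/eqP wd].
  have hpos : 0 < 2 ^ (size p).+1 by rewrite expn_gt0.
  have := entries s0 s1 o d v d n; rewrite exits_d.
  case: (_ == d) => /= h; rewrite expnS; lia.
have h1 := entries2 s0 s1 o v n wd.
have h2 := @alt V s0 s1 o d w x hwx n.+1.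
have h3 := IHx w n.+1.
have hpos : 0 < 2 ^ (size p).+1 by rewrite expn_gt0.
rewrite [2 ^ (size p).+2]expnS.
move: h2; case: (_ == x) => /= h2; lia.
Qed.

Theorem lemma2 (V : finType) (s0 s1 : V -> V) (o d v w : V) (k : nat) :
  o != d ->
  sw_edge s0 s1 v w ->
  ~~ dead_end s0 s1 d w ->
  desperation s0 s1 d w k ->
  forall n : nat, traversals s0 s1 o d v w n <= 2 ^ k.+1 - 1.
Proof.
move=> _ _ _ [[p [hp hl hs]] _] n.
rewrite -hs; exact: main hp hl v n.
Qed.
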